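(* Let $q$ be a Boolean conjunctive query without self-join, let $F\in q$ with $\mathit{key}(F)=\emptyset$, and let $q'=q\setminus\{F\}$. Let $\vec{y}$ be a sequence of distinct variables with $\{\text{variables of }\vec{y}\}=\mathit{vars}(F)$. Let ${\mathbf{db}}$ be an uncertain database that is purified relative to $q$, and let $D$ be the active domain of ${\mathbf{db}}$. Then ${\mathbf{db}}\in\mathsf{CERTAINTY}(q)$ if and only if ${\mathbf{db}}\neq\emptyset$ and for all $\vec{b}\in D^{|\vec{y}|}$, if $F[\vec{y}\mapsto\vec{b}]\in{\mathbf{db}}$ then ${\mathbf{db}}\in\mathsf{CERTAINTY}(q'[\vec{y}\mapsto\vec{b}])$.
   Context: Relation names have signatures $[n,k]$ ($n\ge k\ge1$; arity $n$, primary key positions $1,\dots,k$). Atoms have variables or constants as arguments; a fact is an atom with only constants; facts are key-equal if they have the same relation name and agree on the primary key. $\mathit{key}(F)$ is the set of variables in the primary-key positions of atom $F$, $\mathit{vars}(F)$ its set of variables. An uncertain database is a finite set of facts; its active domain is the set of constants occurring in it; a repair is a maximal subset with no two distinct key-equal facts. A Boolean conjunctive query $q$ is a finite set of atoms (existentially closed conjunction) with variable set $\mathit{vars}(q)$; it has a self-join if a relation name occurs in two of its atoms. $\mathsf{CERTAINTY}(q)$ is the set of uncertain databases all of whose repairs satisfy $q$. For a sequence $\vec{y}=\langle y_1,\dots,y_\ell\rangle$ of distinct variables and constants $\vec{b}=\langle b_1,\dots,b_\ell\rangle$, $X[\vec{y}\mapsto\vec{b}]$ replaces each occurrence of $y_i$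 in $X$ by $b_i$. ${\mathbf{db}}$ is purified relative to $q$ if every fact $A\in{\mathbf{db}}$ satisfies $A\in\theta(q)\subseteq{\mathbf{db}}$ for some valuation $\theta$ over $\mathit{vars}(q)$. *)

(* Defs.v *)
From mathcomp Require Import all_boot.
Set Implicit Arguments. Unset Strict Implicit. Unset Printing Implicit Defensive.

Definition term := (nat + nat)%type.
Definition Var (x : nat) : term := inl x.
Definition Cst (c : nat) : term := inr c.

(* A relation name: (identifier, arity n, key length k); signature [n,k]. *)
Definition relname := (nat * nat * nat)%type.
Definition rel_arity (R : relname) : nat := R.1.2.
Definition rel_keylen (R : relname) : nat := R.2.
Definition wf_rel (R : relname) : bool :=
  (1 <= rel_keylen R) && (rel_keylen R <= rel_arity R).

Definition atom := (relname * seq term)%type.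
Definition arel (A : atom) : relname := A.1.
Definition aargs (A : atom) : seq term := A.2.
Definition wf_atom (A : atom) : bool :=
  wf_rel (arel A) && (size (aargs A) == rel_arity (arel A)).

Definition term_vars (t : term) : seq nat :=
  match t with inl x => [:: x] | inr _ => [::] end.
Definition is_const (t : term) : bool :=
  match t with inl _ => false | inr _ => true end.

Definition atom_vars (A : atom) : seq nat := flatten (map term_vars (aargs A)).
Definition key_vars (A : atom) : seq nat :=
  flatten (map term_vars (take (rel_keylen (arel A)) (aargs A))).

Definition is_fact (A : atom) : bool := all is_const (aargs A).

Definition key_equal (A B : atom) : bool :=
  (arel A == arel B) &&
  (take (rel_keylen (arel A)) (aargs A) == take (rel_keylen (arel B)) (aargs B)).

Definition database := seq atom.
Definition wf_db (db : database) : bool := all (fun A => is_fact A && wf_atom A) db.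

Definition active_domain (db : database) : seq nat :=
  flatten (map (fun A => flatten (map (fun t => match t with inr c => [:: c] | inl _ => [::] end)
                                      (aargs A))) db).

Definition consistent (r : database) : Prop :=
  forall A B, A \in r -> B \in r -> key_equal A B -> A = B.

Definition repair (db r : database) : Prop :=
  {subset r <= db} /\ consistent r /\
  (forall r' : database, {subset r <= r'} -> {subset r' <= db} -> consistent r' ->
     {subset r' <= r}).

Definition query := seq atom.
Definition wf_query (q : query) : bool := all wf_atom q.
Definition self_join_free (q : query) : Prop :=
  forall A B, A \in q -> B \in q -> arel A = arel B -> A = B.

Definition apply_val_term (theta : nat -> nat) (t : term) : term :=
  match t with inl x => inr (theta x) | inr c => inr c end.
Definition apply_val (theta : nat -> nat) (A : atom) : atom :=
  (arel A, map (apply_val_term theta) (aargs A)).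

Definition satisfies (db : database) (q : query) : Prop :=
  exists theta : nat -> nat, {subset map (apply_val theta) q <= db}.

Definition certain (q : query) (db : database) : Prop :=
  forall r, repair db r -> satisfies r q.

Definition purified (q : query) (db : database) : Prop :=
  forall A, A \in db -> exists theta : nat -> nat,
    A \in map (apply_val theta) q /\ {subset map (apply_val theta) q <= db}.

Definition subst_term (y b : seq nat) (t : term) : term :=
  match t with
  | inl x => if x \in y then inr (nth 0 b (index x y)) else inl x
  | inr c => inr c
  end.
Definition subst_atom (y b : seq nat) (A : atom) : atom :=
  (arel A, map (subst_term y b) (aargs A)).
Definition subst_query (y b : seq nat) (q : query) : query :=
  map (subst_atom y b) q.

Definition remove_atom (q : query) (F : atom) : query := filter (fun G => G != F) q.

(* Main.v *)
Require Import Defs.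
From mathcomp Require Import all_boot.

Lemma ke_refl A : key_equal A A.
Proof. by rewrite /key_equal !eqxx. Qed.

Lemma ke_sym A B : key_equal A B = key_equal B A.
Proof. by rewrite /key_equal eq_sym [X in _ && X]eq_sym. Qed.

Lemma ke_trans A B C : key_equal A B -> key_equal B C -> key_equal A C.
Proof.
rewrite /key_equal => /andP[/eqP e1 /eqP e2] /andP[/eqP e3 /eqP e4].
by rewrite e2 e4 e1 e3 !eqxx.
Qed.

Fixpoint ext (s l : database) : database :=
  match l with [::] => s | A :: l' => ext (if has (key_equal A) s then s else A :: s) l' end.

Lemma ext_sub l s : {subset s <= ext s l}.
Proof.
elim: l s => [|A l IH] s x Hx //=.
apply: IH; case: ifP => _ //; by rewrite inE Hx orbT.
Qed.

Lemma ext_in l s : {subset ext s l <= s ++ l}.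
Proof.
elim: l s => [|A l IH] s x /= Hx; first by rewrite cats0.
move: (IH _ _ Hx); rewrite !mem_cat inE; case: ifP => _ //.
  by case/orP => ->; rewrite ?orbT.
by rewrite inE; case/orP => [/orP[]|] ->; rewrite ?orbT.
Qed.

Lemma ext_cons l s : consistent s -> consistent (ext s l).
Proof.
elim: l s => [|A l IH] s Hs //=; apply: IH; case: ifP => // /negbT/hasPn Hn.
move=> X Y; rewrite !inE => /orP[/eqP->|HX] /orP[/eqP->|HY] // Hk.
- by move: (Hn _ HY); rewrite Hk.
- by move: (Hn _ HX); rewrite ke_sym Hk.
- exact: Hs.
Qed.

Lemma ext_max l s A : A \in l -> exists B, B \in ext s l /\ key_equal A B.
Proof.
elim: l s => [|C l IH] s //; rewrite inE => /orP[/eqP->|HA] /=; last exact: IH.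
case: ifP => [/hasP[B HB Hk]|_].
  by exists B; split => //; apply: ext_sub.
exists C; split; last exact: ke_refl.
by apply: ext_sub; rewrite inE eqxx.
Qed.

Lemma ext_repair (db s : database) : {subset s <= db} -> consistent s -> repair db (ext s db) /\ {subset s <= ext s db}.
Proof.
move=> Hsub Hc; split; last exact: ext_sub.
split; [|split; first exact: ext_cons].
  by move=> x /ext_in; rewrite mem_cat => /orP[/Hsub|].
move=> r' H1 H2 H3 A HA.
have [B [HB Hk]] := @ext_max db s A (H2 _ HA).
by rewrite (H3 _ _ HA (H1 _ HB) Hk).
Qed.

Lemma var_in_vars A x : (x \in atom_vars A) = (inl x \in aargs A).
Proof.
rewrite /atom_vars; elim: (aargs A) => [|t s IH] //=.
rewrite mem_cat IH inE; case: t => [z|c] //=; by rewrite inE.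
Qed.

Lemma subst_val (y b : seq nat) theta A :
  (forall x, x \in atom_vars A -> x \in y /\ theta x = nth 0 b (index x y)) ->
  subst_atom y b A = apply_val theta A.
Proof.
move=> H; rewrite /subst_atom /apply_val; congr pair; apply/eq_in_map => [[x|c]] Ht //=.
rewrite -var_in_vars in Ht; have [-> ->] := H _ Ht; by [].
Qed.

Definition th4 (y b : seq nat) (theta : nat -> nat) x :=
  if x \in y then nth 0 b (index x y) else theta x.

Lemma th4_eq y b theta A : apply_val (th4 y b theta) A = apply_val theta (subst_atom y b A).
Proof.
rewrite /apply_val /subst_atom /= -map_comp; congr pair; apply: eq_map => [[x|c]] //=.
by rewrite /th4; case: ifP.
Qed.

Lemma apply_subst_agree (y b : seq nat) theta A :
  (forall x, x \in y -> theta x = nth 0 b (index x y)) ->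
  apply_val theta (subst_atom y b A) = apply_val theta A.
Proof.
move=> H; rewrite /apply_val /subst_atom /= -map_comp; congr pair; apply: eq_map => [[x|c]] //=.
by case: ifP => // /H ->.
Qed.

Lemma const_fix (f : term -> term) T : (forall c, f (inr c) = inr c) ->
  flatten (map term_vars T) = [::] -> map f T = T.
Proof.
move=> Hf; elim: T => [|[x|c] T IH] //= H; by rewrite Hf IH.
Qed.

Lemma key_eq_const F theta (y b : seq nat) : key_vars F = [::] ->
  key_equal (apply_val theta F) (subst_atom y b F).
Proof.
rewrite /key_vars /key_equal /apply_val /subst_atom /= => H.
rewrite eqxx /= -!map_take (@const_fix (apply_val_term theta) _ (fun c => erefl) H) (@const_fix (subst_term y b) _ (fun c => erefl) H) //.

Qed.

Lemma in_adom theta F db x : apply_val theta F \in db -> x \in atom_vars F ->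
  theta x \in active_domain db.
Proof.
move=> HC; rewrite var_in_vars => Hx; apply/flattenP.
exists (flatten (map (fun t => match t with inr c => [:: c] | inl _ => [::] end)
         (aargs (apply_val theta F)))); first exact: map_f.
apply/flattenP; exists [:: theta x]; last by rewrite inE.
by apply: (map_f _ (map_f (apply_val_term theta) Hx)).
Qed.

Theorem lemma8 (q : query) (F : atom) (y : seq nat) (db : database) :
  wf_query q -> self_join_free q -> F \in q -> key_vars F = [::] ->
  uniq y -> (forall x, (x \in y) = (x \in atom_vars F)) ->
  wf_db db -> purified q db ->
  (certain q db <->
   (db != [::] /\
    forall b : seq nat, size b = size y -> all (fun c => c \in active_domain db) b ->
      subst_atom y b F \in db ->
      certain (subst_query y b (remove_atom q F)) db)).
Proof.
move=> _ Hsj HF Hkey _ Hy _ Hpur; split.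
- move=> Hcert; split.
    apply/eqP => E; subst db.
    have rep : repair [::] [::].
      by split; [|split] => // r' _ H _ x /H.
    have [theta Hs] := Hcert _ rep.
    by have := Hs _ (map_f (apply_val theta) HF); rewrite in_nil.
  move=> b _ _ HFb r Hr.
  have [Hrsub [Hrc Hrmax]] := Hr.
  set Fb := subst_atom y b F.
  set s := Fb :: filter (fun A => ~~ key_equal A Fb) r.
  have Hssub : {subset s <= db}.
    move=> x; rewrite inE mem_filter => /orP[/eqP->//|/andP[_ /Hrsub]] //.
  have Hsc : consistent s.
    move=> X Z; rewrite !inE !mem_filter => /orP[/eqP->|/andP[HX1 HX2]]
      /orP[/eqP->|/andP[HZ1 HZ2]] // Hk.
    - by move: HZ1; rewrite ke_sym Hk.
    - by move: HX1; rewrite Hk.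
    - exact: Hrc.
  have [Hr' Hsr'] := @ext_repair db s Hssub Hsc.
  set r' := ext s db in Hr' Hsr'.
  have [Hr'sub [Hr'c _]] := Hr'.
  have [theta Hth] := Hcert _ Hr'.
  have HthF : apply_val theta F = Fb.
    apply: Hr'c; first exact: Hth (map_f _ HF).
      by apply: Hsr'; rewrite inE eqxx.
    exact: key_eq_const.
  have Hagree : forall x, x \in y -> theta x = nth 0 b (index x y).
    move=> x Hx; move: HthF; rewrite /Fb /apply_val /subst_atom => [[/eq_in_map H]].
    have Hx' : inl x \in aargs F by rewrite -var_in_vars -Hy.
    by move: (H _ Hx') => /=; rewrite Hx => [[]].
  have Hin : forall A, A \in r' -> ~~ key_equal A Fb -> A \in r.
    move=> A HA Hn; apply: (Hrmax (A :: r)).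
    + by move=> z Hz; rewrite inE Hz orbT.
    + by move=> z; rewrite inE => /orP[/eqP->|/Hrsub] //; apply: Hr'sub.
    + have Hr_r' : forall Z, Z \in r -> ~~ key_equal Z Fb -> Z \in r'.
        by move=> Z HZ HZn; apply: Hsr'; rewrite inE mem_filter HZn HZ orbT.
      move=> X Z; rewrite !inE => /orP[/eqP->|HX] /orP[/eqP->|HZ] // Hk.
      * apply: Hr'c => //; apply: Hr_r' => //; apply: contra Hn => HZ'.
        exact: ke_trans Hk HZ'.
      * apply: Hr'c => //; apply: Hr_r' => //; apply: contra Hn => HX'.
        by apply: ke_trans HX'; rewrite ke_sym.
      * exact: Hrc.
    + by rewrite inE eqxx.
  exists theta => X /mapP [G' /mapP [G HG ->] ->].
  move: HG; rewrite mem_filter => /andP [HGF HG].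
  rewrite apply_subst_agree //; apply: Hin; first exact: Hth (map_f _ HG).
  rewrite /key_equal negb_and; apply/orP; left; rewrite /Fb /=.
  apply/eqP => E; move: HGF; rewrite (Hsj _ _ HG HF E) eqxx //.
- move=> [Hne Hall] r Hr.
  have [Hrsub [Hrc Hrmax]] := Hr.
  have [A0 HA0] : exists A, A \in db.
    by move: Hne; case: (db) => [|A ?] // _; exists A; rewrite inE eqxx.
  have [theta [_ Hth]] := Hpur _ HA0.
  set T := apply_val theta F.
  have HT : T \in db by apply: Hth; apply: map_f.
  have /hasP [C HC HTC] : has (key_equal T) r.
    case: (boolP (has (key_equal T) r)) => // /hasPn Hn.
    have : T \in r.
      apply: (Hrmax (T :: r)).
      + by move=> z Hz; rewrite inE Hz orbT.
      + by move=> z; rewrite inE => /orP[/eqP->|/Hrsub].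
      + move=> X Z; rewrite !inE => /orP[/eqP->|HX] /orP[/eqP->|HZ] // Hk.
        * by move: (Hn _ HZ); rewrite Hk.
        * by move: (Hn _ HX); rewrite ke_sym Hk.
        * exact: Hrc.
      + by rewrite inE eqxx.
    by move=> HTr; move: (Hn _ HTr); rewrite ke_refl.
  have [theta2 [HC2 Hth2]] := Hpur _ (Hrsub _ HC).
  have [G HG EC] := mapP HC2.
  have EGF : G = F.
    apply: Hsj => //; move: HTC; rewrite /key_equal EC /T /= => /andP[/eqP <- _] //.
  subst G.
  set b := map theta2 y.
  have Hbv : forall x, x \in atom_vars F -> x \in y /\ theta2 x = nth 0 b (index x y).
    move=> x Hx; have Hxy : x \in y by rewrite Hy.
    by split => //; rewrite /b (nth_map 0) ?index_mem // nth_index.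
  have EFb : subst_atom y b F = C.
  by rewrite EC; exact: (subst_val y b theta2 F Hbv).
  have Hdom : all (fun c => c \in active_domain db) b.
    apply/allP => c /mapP [x Hx ->]; apply: (@in_adom theta2 F db x).
      by rewrite -EC; apply: Hrsub.
    by rewrite -Hy.
  have [theta3 Hth3] := Hall b (size_map _ _) Hdom (ltac:(by rewrite EFb; apply: Hrsub)) r Hr.
  exists (th4 y b theta3) => X /mapP [G HG1 ->].
  case: (eqVneq G F) => [->|HGF].
    suff -> : apply_val (th4 y b theta3) F = C by [].
    rewrite -EFb; symmetry; apply: (subst_val y b (th4 y b theta3) F) => x Hx; have Hxy : x \in y by rewrite Hy.
    by rewrite /th4 Hxy.
  rewrite th4_eq; apply: Hth3; apply: map_f; apply: map_f.
  by rewrite mem_filter HGF HG1.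
Qed.
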